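(* Let $d\ge2$ and let $k$ be a positive integer. For each $x\in[0,1)$ fix the binary expansion $x=\sum_{j\ge1}a_j^x2^{-j}$ that does not end in infinitely many $1$'s, and for $x=1$ use $a_j^1=1$ for all $j$. Define $\phi(x)=\sum_{j\ge1}2a_j^x3^{-d(j-1)}$ and $\Phi(x_1,\ldots,x_d)=\sum_{p=1}^d3^{-p}\phi(x_p)$; $\Phi$ is injective on $[0,1]^d$. For $\ell\in\{0,\ldots,2^k-2\}$ let $I_\ell=[\ell2^{-k},(\ell+1)2^{-k})$ and let $I_{2^k-1}=[1-2^{-k},1]$. Suppose $f:[0,1]^d\to\mathbb{R}$ is constant on each of the $2^{kd}$ sets $I_{\ell_1}\times\cdots\times I_{\ell_d}$, $\ell_1,\ldots,\ell_d\in\{0,\ldots,2^k-1\}$. Then $g:=f\circ\Phi^{-1}:\Phi([0,1]^d)\to\mathbb{R}$ is Lipschitz with $$|g(x)-g(y)|\le 2\|f\|_\infty3^{kd}|x-y|\qquad\text{for all }x,y\in\Phi([0,1]^d),$$ where $\|f\|_\infty=\sup_{\mathbf x\in[0,1]^d}|f(\mathbf x)|$. *)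

(* Defs.v *)
From Stdlib Require Import Reals Lra Lia ZArith.
From Coquelicot Require Import Coquelicot.
Open Scope R_scope.

(* Points of [0,1]^d are represented as x : nat -> R, coordinates x 1, ..., x d. *)
Definition in_cube (d : nat) (x : nat -> R) : Prop :=
  forall p : nat, (1 <= p <= d)%nat -> 0 <= x p <= 1.

(* j-th binary digit (j >= 1) of x: for x in [0,1) the digit of the expansion
   not ending in infinitely many 1's, i.e. floor(2^j x) mod 2; for x = 1 all digits are 1. *)
Definition bdigit (x : R) (j : nat) : R :=
  if Req_EM_T x 1 then 1
  else if Z.odd (Int_part (2 ^ j * x)) then 1 else 0.

Definition phi (d : nat) (x : R) : R :=
  Series (fun n : nat => 2 * bdigit x (S n) * (/ 3) ^ (d * n)).

Definition Phi (d : nat) (x : nat -> R) : R :=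
  sum_n_m (fun p : nat => (/ 3) ^ p * phi d (x p)) 1 d.

Definition in_I (k l : nat) (t : R) : Prop :=
  if (l <? 2 ^ k - 1)%nat
  then INR l / 2 ^ k <= t < (INR l + 1) / 2 ^ k
  else (l = 2 ^ k - 1)%nat /\ 1 - / 2 ^ k <= t <= 1.

Definition piecewise_const_dyadic (d k : nat) (f : (nat -> R) -> R) : Prop :=
  forall ls : nat -> nat,
    (forall p, (1 <= p <= d)%nat -> (ls p < 2 ^ k)%nat) ->
    exists c : R, forall x : nat -> R, in_cube d x ->
      (forall p, (1 <= p <= d)%nat -> in_I k (ls p) (x p)) -> f x = c.

Definition sup_norm (d : nat) (f : (nat -> R) -> R) : R :=
  real (Lub_Rbar (fun r : R => exists x, in_cube d x /\ r = Rabs (f x))).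

(* Main.v *)
Require Import Defs.
From Stdlib Require Import Reals Lra Lia ZArith Classical.
From Coquelicot Require Import Coquelicot.
Open Scope R_scope.

Lemma Int_part_uniq (r : R) (z : Z) : IZR z <= r < IZR z + 1 -> Int_part r = z.
Proof.
  intros [H1 H2]. destruct (base_Int_part r) as [H3 H4].
  assert (A : (z - Int_part r < 1)%Z). { apply lt_IZR. rewrite minus_IZR. lra. }
  assert (B : (Int_part r - z < 1)%Z). { apply lt_IZR. rewrite minus_IZR. lra. }
  lia.
Qed.

Lemma bdigit_01 t j : 0 <= bdigit t j <= 1.
Proof. unfold bdigit. destruct (Req_EM_T t 1); [lra|]. destruct (Z.odd _); lra. Qed.

Fixpoint D (t : R) (j : nat) : R :=
  match j with O => 0 | S j' => 2 * D t j' + bdigit t (S j') end.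

Lemma D_one j : D 1 j = 2 ^ j - 1.
Proof.
  induction j; simpl; [lra|]. rewrite IHj. unfold bdigit.
  destruct (Req_EM_T 1 1); [lra|congruence].
Qed.

Lemma D_floor t j : 0 <= t < 1 -> D t j = IZR (Int_part (2 ^ j * t)).
Proof.
  intros Ht. induction j.
  - simpl. rewrite (Int_part_uniq (1 * t) 0); simpl; lra.
  - simpl D. rewrite IHj. unfold bdigit.
    destruct (Req_EM_T t 1); [lra|].
    set (nn := Int_part (2 ^ j * t)). set (mm := Int_part (2 ^ S j * t)).
    destruct (base_Int_part (2 ^ j * t)) as [H1 H2].
    destruct (base_Int_part (2 ^ S j * t)) as [H3 H4].
    fold nn in H1, H2. fold mm in H3, H4.
    assert (E : 2 ^ S j * t = 2 * (2 ^ j * t)) by (simpl; ring).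
    rewrite E in H3, H4.
    assert (A : (mm < 2 * nn + 2)%Z). { apply lt_IZR. rewrite plus_IZR, mult_IZR. simpl. lra. }
    assert (B : (2 * nn < mm + 1)%Z). { apply lt_IZR. rewrite plus_IZR, mult_IZR. simpl. lra. }
    assert (C : mm = (2 * nn)%Z \/ mm = (2 * nn + 1)%Z) by lia.
    destruct C as [C|C]; rewrite C.
    + replace (Z.odd (2 * nn)) with false by (rewrite Z.odd_mul; reflexivity). rewrite mult_IZR. simpl IZR. lra.
    + replace (Z.odd (2 * nn + 1)) with true by (rewrite Z.odd_add, Z.odd_mul; reflexivity). rewrite plus_IZR, mult_IZR. simpl IZR. lra.
Qed.

Lemma pow2_pos k : 0 < 2 ^ k.
Proof. apply pow_lt; lra. Qed.

Section Box.
Variable k : nat.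

Definition box (t : R) : nat :=
  if Req_EM_T t 1 then (2 ^ k - 1)%nat else Z.to_nat (Int_part (2 ^ k * t)).

Lemma pow2_nat_ge1 : (1 <= 2 ^ k)%nat.
Proof. assert (H := Nat.pow_nonzero 2 k). lia. Qed.

Lemma INR_pow2 : INR (2 ^ k) = 2 ^ k.
Proof. rewrite pow_INR. simpl. f_equal. Qed.

Lemma INR_box t : 0 <= t <= 1 -> INR (box t) = D t k.
Proof.
  intros Ht. unfold box. destruct (Req_EM_T t 1) as [e|ne].
  - subst. rewrite D_one, minus_INR by apply pow2_nat_ge1. rewrite INR_pow2. simpl. lra.
  - rewrite D_floor by lra. rewrite INR_IZR_INZ, Z2Nat.id; [reflexivity|].
    destruct (base_Int_part (2 ^ k * t)) as [H1 H2].
    assert (0 <= 2 ^ k * t) by (apply Rmult_le_pos; [left; apply pow2_pos|lra]).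
    assert (A : (-1 < Int_part (2 ^ k * t))%Z) by (apply lt_IZR; simpl; lra). lia.
Qed.

Lemma box_bounds t : 0 <= t <= 1 ->
  (t = 1 /\ INR (box t) = 2 ^ k - 1) \/
  (t < 1 /\ INR (box t) <= 2 ^ k * t < INR (box t) + 1).
Proof.
  intros Ht. rewrite INR_box by lra. destruct (Req_EM_T t 1) as [e|ne].
  - left. subst. rewrite D_one. lra.
  - right. rewrite D_floor by lra. split; [lra|]. destruct (base_Int_part (2 ^ k * t)). lra.
Qed.

Lemma box_lt t : 0 <= t <= 1 -> (box t < 2 ^ k)%nat.
Proof.
  intros Ht. apply INR_lt. rewrite INR_pow2.
  destruct (box_bounds t Ht) as [[_ H]|[H1 [H2 H3]]]; [lra|].
  assert (2 ^ k * t < 2 ^ k * 1) by (apply Rmult_lt_compat_l; [apply pow2_pos|lra]). lra.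
Qed.

Lemma box_in_I t : 0 <= t <= 1 -> in_I k (box t) t.
Proof.
  intros Ht. assert (Hl := box_lt t Ht). assert (P := pow2_pos k).
  assert (P1 := pow2_nat_ge1).
  unfold in_I. destruct (Nat.ltb_spec (box t) (2 ^ k - 1)) as [L|L].
  - destruct (box_bounds t Ht) as [[_ H]|[H1 [H2 H3]]].
    + exfalso. apply lt_INR in L. rewrite minus_INR, INR_pow2 in L by lia. simpl in L. lra.
    + split; [apply Rmult_le_reg_l with (2^k); [lra|]|apply Rmult_lt_reg_l with (2^k); [lra|]];
        field_simplify; lra.
  - split; [lia|]. assert (E : box t = (2 ^ k - 1)%nat) by lia.
    destruct (box_bounds t Ht) as [[H0 H]|[H1 [H2 H3]]]; [split; [|lra]|].
    + rewrite H0. assert (0 < / 2 ^ k) by (apply Rinv_0_lt_compat; lra). lra.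
    + rewrite E, minus_INR, INR_pow2 in H2 by lia. simpl in H2. split; [|lra].
      apply Rmult_le_reg_l with (2^k); [lra|]. field_simplify; lra.
Qed.

Lemma D_ext t s j : (forall i, (1 <= i <= j)%nat -> bdigit t i = bdigit s i) -> D t j = D s j.
Proof.
  induction j; intros H; simpl; [reflexivity|].
  rewrite IHj by (intros; apply H; lia). rewrite (H (S j)) by lia. reflexivity.
Qed.

Lemma box_ext t s : 0 <= t <= 1 -> 0 <= s <= 1 ->
  (forall i, (1 <= i <= k)%nat -> bdigit t i = bdigit s i) -> box t = box s.
Proof.
  intros Ht Hs H. apply INR_eq. rewrite !INR_box by assumption. apply D_ext; assumption.
Qed.
End Box.

Definition upd (L : nat -> nat) (n v : nat) : nat -> nat :=
  fun p => if Nat.eqb p n then v else L p.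

Lemma fin_bound (N : nat) : forall n (G : (nat -> nat) -> R),
  (forall L L', (forall p, (p < n)%nat -> (L p < N)%nat) ->
     (forall p, (p < n)%nat -> L p = L' p) -> G L = G L') ->
  exists B, forall L, (forall p, (p < n)%nat -> (L p < N)%nat) -> Rabs (G L) <= B.
Proof.
  induction n; intros G HG.
  - exists (Rabs (G (fun _ => 0%nat))). intros L _.
    rewrite (HG L (fun _ => 0%nat)); [lra| intros; lia | intros; lia].
  - assert (Claim : forall M, exists B, forall L, (forall p, (p < S n)%nat -> (L p < N)%nat) ->
                      (L n < M)%nat -> Rabs (G L) <= B).
    { induction M.
      - exists 0. intros; lia.
      - destruct IHM as [B1 HB1].
        destruct (lt_dec M N) as [HM|HM].
        + destruct (IHn (fun L => G (upd L n M))) as [B2 HB2].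
          { intros L L' H1 H2. apply HG.
            - intros p Hp. unfold upd. destruct (Nat.eqb_spec p n); [lia|apply H1; lia].
            - intros p Hp. unfold upd. destruct (Nat.eqb_spec p n); [reflexivity|apply H2; lia]. }
          exists (Rmax B1 B2). intros L H1 H2.
          destruct (lt_dec (L n) M) as [h|h].
          * eapply Rle_trans; [apply HB1; auto| apply Rmax_l].
          * rewrite (HG L (upd L n M)); [|auto|].
            -- eapply Rle_trans; [apply HB2; intros; apply H1; lia| apply Rmax_r].
            -- intros p Hp. unfold upd. destruct (Nat.eqb_spec p n); [subst; lia|reflexivity].
        + exists B1. intros L H1 H2. apply HB1; auto. assert (L n < N)%nat by (apply H1; lia). lia. }
    destruct (Claim N) as [B HB]. exists B. intros L H. apply HB; auto.
Qed.

Lemma sup_norm_ge d f : (exists B, forall x, in_cube d x -> Rabs (f x) <= B) ->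
  forall x, in_cube d x -> Rabs (f x) <= sup_norm d f.
Proof.
  intros [B HB] x Hx. unfold sup_norm.
  destruct (Lub_Rbar_correct (fun r : R => exists x, in_cube d x /\ r = Rabs (f x))) as [Hub Hleast].
  assert (H1 : Rbar_le (Rabs (f x)) (Lub_Rbar (fun r : R => exists x, in_cube d x /\ r = Rabs (f x)))).
  { apply Hub. exists x; auto. }
  assert (H2 : Rbar_le (Lub_Rbar (fun r : R => exists x, in_cube d x /\ r = Rabs (f x))) B).
  { apply Hleast. intros r [z [Hz ->]]. simpl. apply HB; auto. }
  destruct (Lub_Rbar _); simpl in *; tauto.
Qed.

Lemma norm_R (x : R) : norm x = Rabs x.
Proof. reflexivity. Qed.

Lemma ex_geom_scal c q : 0 <= q < 1 -> ex_series (fun n => c * q ^ n).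
Proof.
  intros Hq. apply (ex_series_scal_l c (fun n => q ^ n)). apply ex_series_geom.
  rewrite Rabs_pos_eq; lra.
Qed.

Lemma abs_series_bound (a : nat -> R) c q : 0 <= q < 1 ->
  (forall n, Rabs (a n) <= c * q ^ n) -> ex_series a /\ Rabs (Series a) <= c / (1 - q).
Proof.
  intros Hq H.
  assert (Ea : ex_series (fun n => Rabs (a n))).
  { apply (@ex_series_le R_AbsRing R_CompleteNormedModule _ (fun n => c * q ^ n)); [|apply ex_geom_scal; auto].
    intros n. rewrite norm_R, Rabs_Rabsolu. apply H. }
  split.
  - apply (@ex_series_le R_AbsRing R_CompleteNormedModule _ (fun n => c * q ^ n)); [|apply ex_geom_scal; auto].
    intros n. rewrite norm_R. apply H.
  - eapply Rle_trans; [apply Series_Rabs; auto|].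
    eapply Rle_trans; [apply (Series_le _ (fun n => c * q ^ n)); [|apply ex_geom_scal; auto]|].
    + intros n; split; [apply Rabs_pos|apply H].
    + rewrite Series_scal_l, Series_geom by (rewrite Rabs_pos_eq; lra). unfold Rdiv. lra.
Qed.

Lemma ex_a q (e : nat -> R) : 0 <= q < 1 -> (forall n, Rabs (e n) <= 1) ->
  ex_series (fun n => 2 * e n * q ^ n).
Proof.
  intros Hq He. apply (abs_series_bound _ 2 q Hq). intros n.
  rewrite !Rabs_mult, (Rabs_pos_eq 2) by lra. rewrite (Rabs_pos_eq (q ^ n)) by (apply pow_le; lra).
  specialize (He n). assert (0 <= q ^ n) by (apply pow_le; lra).
  assert (Rabs (e n) * q ^ n <= 1 * q ^ n) by (apply Rmult_le_compat_r; lra). nra.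
Qed.

Lemma tail_bound q : 0 <= q < 1 -> forall N (e : nat -> R), (forall n, Rabs (e n) <= 1) ->
  (forall n, (n < N)%nat -> e n = 0) ->
  Rabs (Series (fun n => 2 * e n * q ^ n) - 2 * e N * q ^ N) <= 2 * q ^ (S N) / (1 - q).
Proof.
  intros Hq N. induction N; intros e He Hz.
  - rewrite Series_incr_1 by (apply ex_a; auto). simpl pow.
    replace (2 * e 0%nat * 1 + Series (fun k => 2 * e (S k) * (q * q ^ k)) - 2 * e 0%nat * 1)
      with (Series (fun k => 2 * e (S k) * (q * q ^ k))) by ring.
    replace (2 * (q * 1)) with (2 * q) by ring.
    apply (abs_series_bound _ (2 * q) q Hq). intros n.
    rewrite !Rabs_mult, (Rabs_pos_eq 2), (Rabs_pos_eq q), (Rabs_pos_eq (q ^ n)) by (try apply pow_le; lra).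
    specialize (He (S n)). assert (0 <= q * q ^ n) by (apply Rmult_le_pos; [lra|apply pow_le; lra]).
    assert (Rabs (e (S n)) * (q * q ^ n) <= 1 * (q * q ^ n)) by (apply Rmult_le_compat_r; lra). nra.
  - rewrite Series_incr_1 by (apply ex_a; auto). rewrite Hz by lia.
    rewrite (Series_ext _ (fun k => q * (2 * e (S k) * q ^ k))) by (intros; simpl; ring).
    rewrite Series_scal_l.
    specialize (IHN (fun k => e (S k)) (fun n => He (S n)) (fun n Hn => Hz (S n) ltac:(lia))).
    simpl in IHN |- *.
    replace (2 * 0 * 1 + q * Series (fun n : nat => 2 * e (S n) * q ^ n) - 2 * e (S N) * (q * q ^ N))
      with (q * (Series (fun n : nat => 2 * e (S n) * q ^ n) - 2 * e (S N) * q ^ N)) by ring.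
    rewrite Rabs_mult, (Rabs_pos_eq q) by lra.
    replace (2 * (q * (q * q ^ N)) / (1 - q)) with (q * (2 * (q * q ^ N) / (1 - q))) by (field; lra).
    apply Rmult_le_compat_l; lra.
Qed.

Lemma sR_Chasles (F : nat -> R) n m k : (n <= S m)%nat -> (m <= k)%nat ->
  @eq R (sum_n_m F n k) (sum_n_m F n m + sum_n_m F (S m) k).
Proof. intros H1 H2; exact (@sum_n_m_Chasles R_AbelianMonoid F n m k H1 H2). Qed.
Lemma sR_Sn (F : nat -> R) n m : (n <= m)%nat -> @eq R (sum_n_m F n m) (F n + sum_n_m F (S n) m).
Proof. intros H1; exact (@sum_Sn_m R_AbelianMonoid F n m H1). Qed.
Lemma sR_nS (F : nat -> R) n m : (n <= S m)%nat -> @eq R (sum_n_m F n (S m)) (sum_n_m F n m + F (S m)).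
Proof. intros H1; exact (@sum_n_Sm R_AbelianMonoid F n m H1). Qed.
Lemma sR_zero (F : nat -> R) n m : (m < n)%nat -> @eq R (sum_n_m F n m) 0.
Proof. intros H1; exact (@sum_n_m_zero R_AbelianMonoid F n m H1). Qed.
Lemma sR_plus (F G : nat -> R) n m : @eq R (sum_n_m (fun p => F p + G p) n m) (sum_n_m F n m + sum_n_m G n m).
Proof. exact (@sum_n_m_plus R_AbelianMonoid F G n m). Qed.
Lemma sR_scal (c : R) (F : nat -> R) n m : @eq R (sum_n_m (fun p => c * F p) n m) (c * sum_n_m F n m).
Proof. exact (@sum_n_m_mult_l R_Ring c F n m). Qed.
Lemma sR_minus (F G : nat -> R) n m : @eq R (sum_n_m (fun p => F p - G p) n m) (sum_n_m F n m - sum_n_m G n m).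
Proof.
  unfold Rminus. rewrite sR_plus.
  replace (sum_n_m (fun p => - G p) n m) with (sum_n_m (fun p => (-1) * G p) n m)
    by (apply sum_n_m_ext; intros p; simpl; ring).
  rewrite sR_scal. set (u := sum_n_m F n m). set (v := sum_n_m G n m). simpl in u, v. lra.
Qed.
Lemma sR_abs (F : nat -> R) n m : Rabs (sum_n_m F n m) <= sum_n_m (fun p => Rabs (F p)) n m.
Proof. exact (@norm_sum_n_m R_AbsRing R_NormedModule F n m). Qed.
Lemma sR_le (F G : nat -> R) n m : (forall p, (n <= p <= m)%nat -> F p <= G p) ->
  sum_n_m F n m <= sum_n_m G n m.
Proof.
  intros H. rewrite (sum_n_m_ext_loc F (fun p => Rmin (F p) (G p))).
  - apply sum_n_m_le. intros; apply Rmin_r.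
  - intros p Hp. rewrite Rmin_left; auto.
Qed.
Lemma sR_zero_fun (F : nat -> R) n m : (forall p, (n <= p <= m)%nat -> F p = 0) -> @eq R (sum_n_m F n m) 0.
Proof.
  intros H. rewrite (sum_n_m_ext_loc F (fun _ => zero)) by (intros; rewrite H; auto).
  exact (@sum_n_m_const_zero R_AbelianMonoid n m).
Qed.

Lemma sum_geom3 b : forall a, (a <= S b)%nat ->
  @eq R (sum_n_m (fun p => (/3) ^ p) a b) (((/3) ^ a - (/3) ^ (S b)) * (3 / 2)).
Proof.
  induction b; intros a Ha.
  - destruct a as [|[|a]]; [|rewrite sR_zero by lia; ring|lia].
    rewrite sum_n_n. simpl. field.
  - destruct (Nat.eq_dec a (S (S b))) as [->|Hne].
    + rewrite sR_zero by lia. ring.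
    + rewrite sR_nS by lia. rewrite IHb by lia. simpl. field.
Qed.

Lemma E_bound (c : nat -> R) a b : (a <= b)%nat ->
  (forall p, (a <= p <= b)%nat -> Rabs (c p) <= 1) -> Rabs (c a) = 1 ->
  Rabs (sum_n_m (fun p => (/3) ^ p * c p) a b) >= ((/3) ^ a + (/3) ^ b) / 2.
Proof.
  intros Hab Hc Ha. rewrite sR_Sn by auto.
  assert (R1 : Rabs (sum_n_m (fun p => (/3) ^ p * c p) (S a) b) <= ((/3) ^ a - (/3) ^ b) / 2).
  { eapply Rle_trans; [apply sR_abs|].
    eapply Rle_trans; [apply (sR_le _ (fun p => (/3) ^ p))|].
    - intros p Hp. rewrite Rabs_mult, Rabs_pos_eq by (apply pow_le; lra).
      specialize (Hc p ltac:(lia)). assert (0 <= (/3)^p) by (apply pow_le; lra).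
      assert ((/3)^p * Rabs (c p) <= (/3)^p * 1) by (apply Rmult_le_compat_l; lra). lra.
    - rewrite sum_geom3 by lia. simpl. right. field. }
  assert (R2 : Rabs ((/3) ^ a * c a) = (/3) ^ a) by
    (rewrite Rabs_mult, Ha, Rabs_pos_eq by (apply pow_le; lra); ring).
  assert (T := Rabs_triang ((/3) ^ a * c a + sum_n_m (fun p => (/3) ^ p * c p) (S a) b)
                           (- sum_n_m (fun p => (/3) ^ p * c p) (S a) b)).
  rewrite Rabs_Ropp in T.
  replace ((/3) ^ a * c a + sum_n_m (fun p => (/3) ^ p * c p) (S a) b +
           - sum_n_m (fun p => (/3) ^ p * c p) (S a) b) with ((/3) ^ a * c a) in T by ring.
  lra.
Qed.

Lemma bdigit_cases t j : bdigit t j = 0 \/ bdigit t j = 1.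
Proof. unfold bdigit. destruct (Req_EM_T t 1); [auto|]. destruct (Z.odd _); auto. Qed.

Lemma phi_eq d t : phi d t = Series (fun n => 2 * bdigit t (S n) * ((/3) ^ d) ^ n).
Proof. unfold phi. apply Series_ext. intros n. rewrite pow_mult. reflexivity. Qed.

Lemma Phi_gap d (x y : nat -> R) N p0 : (1 <= d)%nat -> (1 <= p0 <= d)%nat ->
  (forall p n, (1 <= p <= d)%nat -> (n < N)%nat -> bdigit (x p) (S n) = bdigit (y p) (S n)) ->
  (forall p, (1 <= p < p0)%nat -> bdigit (x p) (S N) = bdigit (y p) (S N)) ->
  bdigit (x p0) (S N) <> bdigit (y p0) (S N) ->
  (/3) ^ (d * N + p0) <= Rabs (Phi d x - Phi d y).
Proof.
  intros Hd Hp0 HN Hlt Hne.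
  set (q := (/3) ^ d).
  assert (Hq : 0 <= q < 1).
  { unfold q. apply pow_lt_1_compat; [lra|lia]. }
  set (e := fun p n => bdigit (x p) (S n) - bdigit (y p) (S n)).
  assert (He : forall p n, Rabs (e p n) <= 1).
  { intros p n. unfold e. destruct (bdigit_cases (x p) (S n)) as [-> | ->];
      destruct (bdigit_cases (y p) (S n)) as [-> | ->];
      rewrite ?Rminus_0_r, ?Rminus_diag, ?Rabs_R0, ?Rabs_R1; try lra.
    rewrite Rabs_left; lra. }
  set (S_ := fun p => Series (fun n => 2 * e p n * q ^ n)).
  assert (HD : Phi d x - Phi d y = sum_n_m (fun p => (/3) ^ p * S_ p) 1 d).
  { unfold Phi. rewrite <- sR_minus. apply sum_n_m_ext. intros p.
    unfold S_. rewrite !phi_eq. fold q.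
    assert (Ex : forall t, ex_series (fun n => 2 * bdigit t (S n) * q ^ n)).
    { intros t. apply ex_a; auto. intros n. destruct (bdigit_cases t (S n)) as [-> | ->];
        rewrite ?Rabs_R0, ?Rabs_R1; lra. }
    rewrite (Series_ext (fun n => 2 * e p n * q ^ n)
              (fun n => 2 * bdigit (x p) (S n) * q ^ n - 2 * bdigit (y p) (S n) * q ^ n))
      by (intros; unfold e; ring).
    rewrite Series_minus by auto. simpl. ring. }
  set (E := sum_n_m (fun p => (/3) ^ p * e p N) 1 d).
  assert (HE : Rabs E >= ((/3) ^ p0 + q) / 2).
  { unfold E. rewrite (sR_Chasles _ 1 (p0 - 1) d) by lia.
    rewrite (sR_zero_fun _ 1 (p0 - 1)).
    2:{ intros p Hp. unfold e. rewrite Hlt by lia. ring. }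
    replace (S (p0 - 1)) with p0 by lia. rewrite Rplus_0_l. unfold q.
    apply E_bound; [lia| intros; apply He |].
    unfold e. destruct (bdigit_cases (x p0) (S N)) as [h1|h1];
      destruct (bdigit_cases (y p0) (S N)) as [h2|h2]; rewrite h1, h2 in *; try lra.
    - rewrite Rabs_left; lra.
    - replace (1 - 0) with 1 by ring. apply Rabs_R1. }
  assert (HR : Rabs (sum_n_m (fun p => (/3) ^ p * S_ p) 1 d - 2 * q ^ N * E) <= q ^ (S N)).
  { unfold E. rewrite <- sR_scal, <- sR_minus.
    eapply Rle_trans; [apply sR_abs|].
    eapply Rle_trans; [apply (sR_le _ (fun p => (/3) ^ p * (2 * q ^ (S N) / (1 - q))))|].
    - intros p Hp. unfold S_.
      replace ((/3) ^ p * Series (fun n => 2 * e p n * q ^ n) - 2 * q ^ N * ((/3) ^ p * e p N))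
        with ((/3) ^ p * (Series (fun n => 2 * e p n * q ^ n) - 2 * e p N * q ^ N)) by ring.
      rewrite Rabs_mult, (Rabs_pos_eq ((/3)^p)) by (apply pow_le; lra).
      apply Rmult_le_compat_l; [apply pow_le; lra|].
      apply tail_bound; auto.
      intros n Hn. unfold e. rewrite HN by lia. ring.
    - rewrite (sum_n_m_ext _ (fun p => (2 * q ^ (S N) / (1 - q)) * (/3) ^ p)) by (intros; simpl; ring).
      rewrite sR_scal, sum_geom3 by lia. right. unfold q. simpl. field.
      fold q. lra. }
  assert (Hpow : (/3) ^ (d * N + p0) = q ^ N * (/3) ^ p0) by (unfold q; rewrite pow_add, pow_mult; ring).
  rewrite Hpow, HD.
  pose (Z := (sum_n_m (fun p => (/3) ^ p * S_ p) 1 d : R)).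
  change (sum_n_m (fun p => (/3) ^ p * S_ p) 1 d) with Z in HR |- *. clearbody Z.
  assert (T := Rabs_triang Z (- (Z - 2 * q ^ N * E))).
  replace (Z + - (Z - 2 * q ^ N * E)) with (2 * q ^ N * E) in T by ring.
  rewrite Rabs_Ropp in T.
  rewrite Rabs_mult, Rabs_mult, (Rabs_pos_eq 2), (Rabs_pos_eq (q ^ N)) in T
    by (try apply pow_le; lra).
  assert (0 <= q ^ N) by (apply pow_le; lra).
  assert (q ^ N * Rabs E >= q ^ N * (((/3) ^ p0 + q) / 2)) by (apply Rle_ge, Rmult_le_compat_l; lra).
  simpl in HR. lra.
Qed.

Lemma min_nat (P : nat -> Prop) n : P n -> exists m, P m /\ forall j, (j < m)%nat -> ~ P j.
Proof.
  induction n as [n IH] using (well_founded_induction lt_wf). intros Pn.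
  destruct (classic (exists j, (j < n)%nat /\ P j)) as [[j [Hj Pj]]|H].
  - apply (IH j Hj Pj).
  - exists n. split; auto. intros j Hj Pj. apply H. eauto.
Qed.

Lemma pow_inv3_mono m M : (m <= M)%nat -> (/3) ^ M <= (/3) ^ m.
Proof.
  intros H. replace M with (m + (M - m))%nat by lia. rewrite pow_add.
  assert (0 <= (/3) ^ m) by (apply pow_le; lra).
  destruct (M - m)%nat as [|t]; [simpl; lra|].
  assert (0 <= (/3) ^ S t < 1) by (apply pow_lt_1_compat; [lra|lia]). nra.
Qed.

Lemma rep_in k l : (l < 2 ^ k)%nat -> 0 <= INR l / 2 ^ k <= 1 /\ in_I k l (INR l / 2 ^ k).
Proof.
  intros Hl. assert (P := pow2_pos k). assert (P1 := pow2_nat_ge1 k).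
  assert (Hl' : INR l + 1 <= 2 ^ k) by (rewrite <- INR_pow2, <- S_INR; apply le_INR; lia).
  assert (0 <= INR l) by apply pos_INR.
  split.
  - split; [apply Rmult_le_pos; [lra|left; apply Rinv_0_lt_compat; lra]|].
    apply Rmult_le_reg_l with (2^k); [lra|]. field_simplify; lra.
  - unfold in_I. destruct (Nat.ltb_spec l (2 ^ k - 1)) as [L|L].
    + split; [lra|]. apply Rmult_lt_reg_l with (2^k); [lra|]. field_simplify; lra.
    + split; [lia|]. assert (E : l = (2 ^ k - 1)%nat) by lia.
      rewrite E, minus_INR, INR_pow2 by lia. simpl. split; [right; field; lra|].
      apply Rmult_le_reg_l with (2^k); [lra|]. field_simplify; lra.
Qed.

Theorem lemma3 (d k : nat) (hd : (2 <= d)%nat) (hk : (1 <= k)%nat)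
  (f : (nat -> R) -> R) (hf : piecewise_const_dyadic d k f) :
  forall x y : nat -> R, in_cube d x -> in_cube d y ->
    Rabs (f x - f y) <= 2 * sup_norm d f * 3 ^ (k * d) * Rabs (Phi d x - Phi d y).
Proof.
  intros x y hx hy.
  set (rep := fun (L : nat -> nat) (p : nat) => INR (L p) / 2 ^ k).
  set (Lb := fun (z : nat -> R) (p : nat) => if Nat.eqb p 0 then 0%nat else box k (z p)).
  assert (Hpk := pow2_nat_ge1 k).
  assert (LbB : forall z, in_cube d z -> forall p, (p < S d)%nat -> (Lb z p < 2 ^ k)%nat).
  { intros z Hz p Hp. unfold Lb. destruct (Nat.eqb_spec p 0); [lia|].
    apply box_lt, Hz; lia. }
  assert (Hrep : forall L, (forall p, (1 <= p <= d)%nat -> (L p < 2 ^ k)%nat) ->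
            in_cube d (rep L) /\ forall p, (1 <= p <= d)%nat -> in_I k (L p) (rep L p)).
  { intros L HL. split; intros p Hp; unfold rep; apply rep_in; auto. }
  assert (Hbnd : exists B, forall z, in_cube d z -> Rabs (f z) <= B).
  { destruct (fin_bound (2 ^ k) (S d) (fun L => f (rep L))) as [B HB].
    - intros L L' H1 H2. destruct (hf L) as [c Hc]; [intros; apply H1; lia|].
      destruct (Hrep L) as [A1 A2]; [intros; apply H1; lia|].
      rewrite (Hc _ A1 A2). symmetry. apply Hc.
      + intros p Hp. unfold rep. rewrite <- H2 by lia. apply A1; auto.
      + intros p Hp. unfold rep. rewrite <- H2 by lia. apply A2; auto.
    - exists B. intros z Hz.
      destruct (hf (Lb z)) as [c Hc]; [intros; apply LbB; auto; lia|].
      destruct (Hrep (Lb z)) as [A1 A2]; [intros; apply LbB; auto; lia|].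
      rewrite (Hc z Hz).
      + rewrite <- (Hc _ A1 A2). apply HB. apply LbB; auto.
      + intros p Hp. unfold Lb. destruct (Nat.eqb_spec p 0); [lia|]. apply box_in_I, Hz; auto. }
  assert (Hs := sup_norm_ge d f Hbnd).
  set (S0 := sup_norm d f) in *.
  assert (S0pos : 0 <= S0) by (eapply Rle_trans; [apply Rabs_pos|apply (Hs x hx)]).
  assert (P3 : 0 <= 3 ^ (k * d)) by (apply pow_le; lra).
  destruct (classic (forall p, (1 <= p <= d)%nat -> forall j, (1 <= j <= k)%nat ->
                       bdigit (x p) j = bdigit (y p) j)) as [Heq|Hne].
  - destruct (hf (Lb x)) as [c Hc]; [intros; apply LbB; auto; lia|].
    rewrite (Hc x hx), (Hc y hy).
    + rewrite Rminus_diag, Rabs_R0. apply Rmult_le_pos; [|apply Rabs_pos].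
      apply Rmult_le_pos; [lra|auto].
    + intros p Hp. unfold Lb. destruct (Nat.eqb_spec p 0); [lia|].
      rewrite (box_ext k (x p) (y p)); try (apply hx || apply hy); auto.
      apply box_in_I, hy; auto.
    + intros p Hp. unfold Lb. destruct (Nat.eqb_spec p 0); [lia|]. apply box_in_I, hx; auto.
  - assert (Hex : exists n, exists p, ((1 <= p <= d)%nat /\ (n < k)%nat) /\
                      bdigit (x p) (S n) <> bdigit (y p) (S n)).
    { apply NNPP. intro C. apply Hne. intros p Hp j Hj. apply NNPP. intro D0. apply C.
      exists (j - 1)%nat, p. replace (S (j - 1)) with j by lia. split; [split; [auto|lia]|auto]. }
    destruct Hex as [n0 Hn0].
    destruct (min_nat (fun n => exists p, ((1 <= p <= d)%nat /\ (n < k)%nat) /\ bdigit (x p) (S n) <> bdigit (y p) (S n)) n0 Hn0) as [N [[p1 [[Hp1 HNk] Hd1]] HNmin]].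
    destruct (min_nat (fun p => (1 <= p <= d)%nat /\ bdigit (x p) (S N) <> bdigit (y p) (S N)) p1
                (conj Hp1 Hd1)) as [p0 [[Hp0 Hd0] Hp0min]].
    assert (G := Phi_gap d x y N p0 ltac:(lia) Hp0).
    assert (Gap : (/3) ^ (d * N + p0) <= Rabs (Phi d x - Phi d y)).
    { apply G; auto.
      - intros p n Hp Hn. apply NNPP. intro C. apply (HNmin n Hn).
        exists p. split; [split; [auto|lia]|auto].
      - intros p Hp. apply NNPP. intro C. apply (Hp0min p ltac:(lia)). split; [lia|auto]. }
    assert (Mono : (/3) ^ (k * d) <= (/3) ^ (d * N + p0)) by (apply pow_inv3_mono; nia).
    assert (One : 3 ^ (k * d) * (/3) ^ (k * d) = 1).
    { rewrite <- Rpow_mult_distr. replace (3 * / 3) with 1 by field. apply pow1. }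
    assert (Tri : Rabs (f x - f y) <= 2 * S0).
    { unfold Rminus. eapply Rle_trans; [apply Rabs_triang|]. rewrite Rabs_Ropp.
      assert (H1 := Hs x hx). assert (H2 := Hs y hy). lra. }
    eapply Rle_trans; [apply Tri|].
    apply Rle_trans with (2 * S0 * 3 ^ (k * d) * (/3) ^ (k * d)).
    { right. transitivity (2 * S0 * (3 ^ (k * d) * (/3) ^ (k * d))); [rewrite One; ring|ring]. }
    apply Rmult_le_compat_l; [apply Rmult_le_pos; [apply Rmult_le_pos; lra|auto]|].
    lra.
Qed.
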